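(* Let $g\in L^2(\mathbb{R}^3)$, $\theta\in\mathbb{R}$ and $(u_0,\alpha_0)\in L^2(\mathbb{R}^3)\oplus L^2(\mathbb{R}^3)$. If $(u_\theta,\alpha_\theta)\in C^0(\mathbb{R},L^2\oplus L^2)$ is a solution of $$u_\theta(x)=u_0(x)\exp\Big\{-i\int_0^\theta (A_g)_\tau(x)d\tau\Big\},\qquad \alpha_\theta(k)=\alpha_0(k)-ig(k)\int_0^\theta F(|u_\tau|^2)(k)d\tau,$$ then it is unique: any $(v_\theta,\beta_\theta)\in C^0(\mathbb{R},L^2\oplus L^2)$ satisfying the same system with the same initial datum equals $(u_\theta,\alpha_\theta)$.
   Context: $(A_g)_\tau(x)=\int_{\mathbb{R}^3}\big(g(k)\bar\alpha_\tau(k)e^{-ik\cdot x}+\bar g(k)\alpha_\tau(k)e^{ik\cdot x}\big)dk$ and $F(|u|^2)(k)=\int_{\mathbb{R}^3}e^{-ik\cdot x}|u(x)|^2dx$. *)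

(* Defs.v *)
From HB Require Import structures.
From mathcomp Require Import all_boot all_order all_algebra.
From mathcomp Require Import all_classical all_reals all_analysis.
From mathcomp.real_closed Require Import complex.

Set Implicit Arguments.
Unset Strict Implicit.
Unset Printing Implicit Defensive.

Import Order.TTheory GRing.Theory Num.Theory.
Import numFieldNormedType.Exports.

Local Open Scope classical_set_scope.
Local Open Scope ring_scope.
Local Open Scope complex_scope.

Section Defs.
Variable R : realType.

Definition R3 := ((R * R) * R)%type.

Definition leb3 := (((@lebesgue_measure R) \x (@lebesgue_measure R))
                      \x (@lebesgue_measure R))%E.

Definition dot3 (k x : R3) : R :=
  k.1.1 * x.1.1 + k.1.2 * x.1.2 + k.2 * x.2.

Definition expi (phi : R) : R[i] := cos phi +i* sin phi.

Definition csq (z : R[i]) : R := complex.Re z ^+ 2 + complex.Im z ^+ 2.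

Definition cint3 (f : R3 -> R[i]) : R[i] :=
  Rintegral leb3 setT (fun x => complex.Re (f x)) +i* Rintegral leb3 setT (fun x => complex.Im (f x)).

Definition oint (theta : R) (h : R -> R) : R :=
  if 0 <= theta then Rintegral (@lebesgue_measure R) `[0, theta] h
  else - Rintegral (@lebesgue_measure R) `[theta, 0] h.

Definition coint (theta : R) (h : R -> R[i]) : R[i] :=
  oint theta (fun t => complex.Re (h t)) +i* oint theta (fun t => complex.Im (h t)).

Definition L2 (f : R3 -> R[i]) : Prop :=
  [/\ measurable_fun setT (fun x => complex.Re (f x)),
      measurable_fun setT (fun x => complex.Im (f x)) &
      (\int[leb3]_x (csq (f x))%:E < +oo)%E].

Definition C0L2 (u : R -> R3 -> R[i]) : Prop :=
  (forall t, L2 (u t)) /\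
  (forall t, (\int[leb3]_x (csq (u s x - u t x))%:E)%E @[s --> t] --> 0%E).

Definition FT_sq (u : R3 -> R[i]) (k : R3) : R[i] :=
  cint3 (fun x => expi (- dot3 k x) * (csq (u x))%:C).

(** The integrand is of the form z + conj z, so the integral is real;
    we take its real part (its imaginary part is the integral of 0). *)
Definition Ag (g : R3 -> R[i]) (alpha : R -> R3 -> R[i]) (tau : R) (x : R3) : R :=
  complex.Re (cint3 (fun k => g k * (alpha tau k)^* * expi (- dot3 k x)
                    + (g k)^* * alpha tau k * expi (dot3 k x))).

(** (u, alpha) solves the system with initial datum (u0, alpha0):
    both equations hold in L^2, i.e. almost everywhere, for every theta. *)
Definition is_solution (g u0 alpha0 : R3 -> R[i])
    (u alpha : R -> R3 -> R[i]) : Prop :=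
  forall theta : R,
    {ae leb3, forall x, u theta x =
        u0 x * expi (- oint theta (fun tau => Ag g alpha tau x))} /\
    {ae leb3, forall k, alpha theta k =
        alpha0 k - 'i * g k * coint theta (fun tau => FT_sq (u tau) k)}.

End Defs.

(* Main.v *)
Require Import Defs.
From HB Require Import structures.
From mathcomp Require Import all_boot all_order all_algebra.
From mathcomp Require Import all_classical all_reals all_analysis.
From mathcomp.real_closed Require Import complex.
From mathcomp Require Import ring.

Local Open Scope classical_set_scope.
Local Open Scope ring_scope.
Local Open Scope complex_scope.

Import Order.TTheory GRing.Theory Num.Theory.

Section Helpers.
Variable R : realType.

Definition cmeas (f : R3 R -> R[i]) :=
  measurable_fun setT (fun x => complex.Re (f x)) /\
  measurable_fun setT (fun x => complex.Im (f x)).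

Lemma ReM (a b : R[i]) : complex.Re (a * b) =
  complex.Re a * complex.Re b - complex.Im a * complex.Im b.
Proof. by case: a => ? ?; case: b => ? ?. Qed.

Lemma ImM (a b : R[i]) : complex.Im (a * b) =
  complex.Re a * complex.Im b + complex.Im a * complex.Re b.
Proof. by case: a => ? ?; case: b => ? ?. Qed.

Lemma ReD (a b : R[i]) : complex.Re (a + b) = complex.Re a + complex.Re b.
Proof. by case: a => ? ?; case: b => ? ?. Qed.

Lemma ImD (a b : R[i]) : complex.Im (a + b) = complex.Im a + complex.Im b.
Proof. by case: a => ? ?; case: b => ? ?. Qed.

Lemma csq_expi (a : R[i]) phi : csq (a * expi phi) = csq a.
Proof.
rewrite /csq ReM ImM /expi /=.
have H := cos2Dsin2 phi.
transitivity ((complex.Re a ^+ 2 + complex.Im a ^+ 2) * (cos phi ^+ 2 + sin phi ^+ 2)).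
  ring.
by rewrite H mulr1.
Qed.

Lemma cmeasM f h : cmeas f -> cmeas h -> cmeas (fun x => f x * h x).
Proof.
move=> [fr fi] [hr hi]; split.
  have -> : (fun x => complex.Re (f x * h x)) =
    ((fun x => complex.Re (f x)) \* (fun x => complex.Re (h x))) \-
    ((fun x => complex.Im (f x)) \* (fun x => complex.Im (h x))).
    by apply/funext => x; rewrite ReM.
  by apply: measurable_realfun.measurable_funB; apply: measurable_realfun.measurable_funM.
have -> : (fun x => complex.Im (f x * h x)) =
  ((fun x => complex.Re (f x)) \* (fun x => complex.Im (h x))) \+
  ((fun x => complex.Im (f x)) \* (fun x => complex.Re (h x))).
  by apply/funext => x; rewrite ImM.
by apply: measurable_realfun.measurable_funD; apply: measurable_realfun.measurable_funM.
Qed.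
Arguments cmeasM {f h}.


Lemma cmeasD f h : cmeas f -> cmeas h -> cmeas (fun x => f x + h x).
Proof.
move=> [fr fi] [hr hi]; split.
  have -> : (fun x => complex.Re (f x + h x)) =
    (fun x => complex.Re (f x)) \+ (fun x => complex.Re (h x)).
    by apply/funext => x; rewrite ReD.
  exact: measurable_realfun.measurable_funD.
have -> : (fun x => complex.Im (f x + h x)) =
  (fun x => complex.Im (f x)) \+ (fun x => complex.Im (h x)).
  by apply/funext => x; rewrite ImD.
exact: measurable_realfun.measurable_funD.
Qed.
Arguments cmeasD {f h}.


Lemma cmeasJ f : cmeas f -> cmeas (fun x => (f x)^*).
Proof.
move=> [fr fi]; split.
  have -> : (fun x => complex.Re ((f x)^*)) = (fun x => complex.Re (f x)).
    by apply/funext => x; case: (f x).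
  exact: fr.
have -> : (fun x => complex.Im ((f x)^*)) = \- (fun x => complex.Im (f x)).
  by rewrite funeqE => x /=; case: (f x).
exact: measurable_realfun.measurable_funN.
Qed.
Arguments cmeasJ {f}.


Lemma cmeasC (p : R3 R -> R) : measurable_fun setT p -> cmeas (fun x => (p x)%:C).
Proof.
move=> mp; split => //=.
Qed.
Arguments cmeasC {p}.


Lemma cmeas_expi (p : R3 R -> R) : measurable_fun setT p -> cmeas (fun x => expi (p x)).
Proof.
move=> mp; split => /=.
  exact: (measurableT_comp (measurable_realfun.continuous_measurable_fun (@continuous_cos R)) mp).
exact: (measurableT_comp (measurable_realfun.continuous_measurable_fun (@continuous_sin R)) mp).
Qed.
Arguments cmeas_expi {p}.


Lemma meas_p11 : measurable_fun setT (fun x : R3 R => x.1.1).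
Proof. exact: (measurableT_comp measurable_fst measurable_fst). Qed.
Lemma meas_p12 : measurable_fun setT (fun x : R3 R => x.1.2).
Proof. exact: (measurableT_comp measurable_snd measurable_fst). Qed.
Lemma meas_p2 : measurable_fun setT (fun x : R3 R => x.2).
Proof. exact: measurable_snd. Qed.

Lemma meas_dot1 (k : R3 R) : measurable_fun setT (fun x => dot3 k x).
Proof.
rewrite /dot3.
apply: measurable_realfun.measurable_funD; [apply: measurable_realfun.measurable_funD|];
  apply: measurable_realfun.measurable_funM; try exact: measurable_cst.
- exact: meas_p11.
- exact: meas_p12.
- exact: meas_p2.
Qed.

Lemma meas_dot2 (x : R3 R) : measurable_fun setT (fun k => dot3 k x).
Proof.
rewrite /dot3.
apply: measurable_realfun.measurable_funD; [apply: measurable_realfun.measurable_funD|];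
  apply: measurable_realfun.measurable_funM; try exact: measurable_cst.
- exact: meas_p11.
- exact: meas_p12.
- exact: meas_p2.
Qed.

Lemma FFae : Filter (nbhs (almost_everywhere (@leb3 R))).
Proof. exact: ae_filter_ringOfSetsType. Qed.

Lemma cint3_ae f h : cmeas f -> cmeas h ->
  {ae @leb3 R, forall x, f x = h x} -> cint3 f = cint3 h.
Proof.
move=> [fr fi] [hr hi] E; have FF := FFae; rewrite /cint3 /Rintegral.
congr (fine _ +i* fine _); apply: ae_eq_integral => //.
- exact/measurable_realfun.measurable_EFinP.
- exact/measurable_realfun.measurable_EFinP.
- by apply: filterS E => x ->.
- exact/measurable_realfun.measurable_EFinP.
- exact/measurable_realfun.measurable_EFinP.
- by apply: filterS E => x ->.
Qed.
Arguments cint3_ae {f h}.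


Lemma meas_csq (w : R3 R -> R[i]) : cmeas w -> measurable_fun setT (fun x => csq (w x)).
Proof.
move=> [wr wi]; rewrite /csq.
exact: (measurable_realfun.measurable_funD (measurable_realfun.measurable_funM wr wr)
          (measurable_realfun.measurable_funM wi wi)).
Qed.
Arguments meas_csq {w}.


Lemma cmeas_FT (w : R3 R -> R[i]) (k : R3 R) : cmeas w ->
  cmeas (fun x => expi (- dot3 k x) * (csq (w x))%:C).
Proof.
move=> wm.
have m1 : measurable_fun setT (fun x => - dot3 k x).
  exact: (measurable_realfun.measurable_funN (meas_dot1 k)).
have c1 := cmeas_expi m1.
have c2 := cmeasC (meas_csq wm).
exact: (cmeasM c1 c2).
Qed.

Lemma cmeas_Ag (g a : R3 R -> R[i]) (x : R3 R) : cmeas g -> cmeas a ->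
  cmeas (fun k => g k * (a k)^* * expi (- dot3 k x) + (g k)^* * a k * expi (dot3 k x)).
Proof.
move=> gm am.
have m1 : measurable_fun setT (fun k => - dot3 k x).
  exact: (measurable_realfun.measurable_funN (meas_dot2 x)).
exact: (cmeasD (cmeasM (cmeasM gm (cmeasJ am))
                  (cmeas_expi m1))
               (cmeasM (cmeasM (cmeasJ gm) am) (cmeas_expi (meas_dot2 x)))).
Qed.

End Helpers.

Theorem proposition3 (R : realType) (g : R3 R -> R[i]) (theta : R)
    (u0 alpha0 : R3 R -> R[i]) (u alpha v beta : R -> R3 R -> R[i]) :
  L2 g -> L2 u0 -> L2 alpha0 ->
  C0L2 u -> C0L2 alpha -> is_solution g u0 alpha0 u alpha ->
  C0L2 v -> C0L2 beta -> is_solution g u0 alpha0 v beta ->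
  {ae @leb3 R, forall x, v theta x = u theta x} /\
  {ae @leb3 R, forall k, beta theta k = alpha theta k}.
Proof.
move=> [gr gi _] _ _ [Lu _] [La _] Su [Lv _] [Lb _] Sv.
have FF := FFae R.
have gm : @cmeas R g by [].
have cm (w : R3 R -> R[i]) : L2 w -> @cmeas R w by case.
have Huv t : {ae @leb3 R, forall x, csq (v t x) = csq (u t x)}.
  have [A _] := Sv t; have [B _] := Su t.
  apply: (filterS2 _ _ A B) => x E1 E2.
  have T1 := f_equal (@csq R) E1.
  have T2 := csq_expi R (u0 x) (- oint t (fun tau => Ag g beta tau x)).
  have T3 := f_equal (@csq R) E2.
  have T4 := csq_expi R (u0 x) (- oint t (fun tau => Ag g alpha tau x)).
  exact: (etrans T1 (etrans T2 (esym (etrans T3 T4)))).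
have FTeq t k : FT_sq (v t) k = FT_sq (u t) k.
  apply: (@cint3_ae R _ _ (@cmeas_FT R _ k (cm _ (Lv t))) (@cmeas_FT R _ k (cm _ (Lu t)))).
  by apply: filterS (Huv t) => x E; exact: (f_equal (fun r => expi (- dot3 k x) * r%:C) E).
have Hab th : {ae @leb3 R, forall k, beta th k = alpha th k}.
  have [_ A] := Sv th; have [_ B] := Su th.
  apply: (filterS2 _ _ A B) => k E1 E2.
  have E : (fun tau => FT_sq (v tau) k) = (fun tau => FT_sq (u tau) k).
    by apply/funext => t; exact: FTeq.
  exact: (etrans E1 (etrans (f_equal (fun F => alpha0 k - 'i * g k * coint th F) E) (esym E2))).
split; last exact: Hab.
have Agq tau x : Ag g beta tau x = Ag g alpha tau x.
  rewrite /Ag; apply: (f_equal (@complex.Re R)).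
  apply: (@cint3_ae R _ _ (@cmeas_Ag R _ _ x gm (cm _ (Lb tau))) (@cmeas_Ag R _ _ x gm (cm _ (La tau)))).
  apply: filterS (Hab tau) => k E.
  exact: (f_equal (fun z => g k * z^* * expi (- dot3 k x) + (g k)^* * z * expi (dot3 k x)) E).
have [A _] := Sv theta; have [B _] := Su theta.
apply: (filterS2 _ _ A B) => x E1 E2.
have E : (fun tau => Ag g beta tau x) = (fun tau => Ag g alpha tau x).
  by apply/funext => t; exact: Agq.
exact: (etrans E1 (etrans (f_equal (fun F => u0 x * expi (- oint theta F)) E) (esym E2))).
Qed.
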